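(* Let $\vec{m}\in\mathbb{R}^N$ denote a vector of $N$ homodyne measurement outcomes and $\vec{\theta}$ a vector of $N$ homodyne-measurement angles with $\theta_j \in(-\tfrac{\pi}{2},\tfrac{\pi}{2}]$ for all $j$. Let $\hat{B}^{(N)} \to \mathbf{R}$ be a real beam-splitter network, where $\mathbf{R} \in \mathrm{O}(N)$ is neither block diagonal nor a row permutation away from block diagonal. Let $\vec{\theta}'$ be another vector of $N$ measurement angles with $\theta'_i\in(-\tfrac{\pi}{2},\tfrac{\pi}{2}]$, and let $\mathbf{L} \in \mathbb{R}^{N\times N}$ be a real matrix for which there exists a Gaussian unitary $\hat{U}_G$ satisfying $\sqrt{|\det \mathbf{L}^{-1}|}\, {}_{p}\!\langle \mathbf{L}^{-1} \vec{m}| = {}_{p}\!\langle \vec{m}| \hat{U}_G$. Then, given $\vec{\theta}$ and $\hat{B}^{(N)}$, there does not exist a pair $(\vec{\theta}',\mathbf{L})$ such that for all $\vec{m}\in\mathbb{R}^N$, $${}_{p_{\vec{\theta}}}\!\langle \vec{m}|\, \hat{B}^{(N)} = \sqrt{|\det \mathbf{L}^{-1}|}\; {}_{p_{\vec{\theta}'}}\!\langle \mathbf{L}^{-1} \vec{m}|,$$ unless $\vec{\theta}=\theta\vec{1}_N$ (all angles equal), where $\vec{1}_N=(1,\ldots,1)^{\mathsf{T}}$.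
   Context: Modes have quadratures $\hat q=(\hat a+\hat a^\dagger)/\sqrt2$, $\hat p=-i(\hat a-\hat a^\dagger)/\sqrt2$. The rotated quadrature is $\hat p_\theta = \hat R^\dagger(\theta)\hat p\hat R(\theta)=\hat p\cos\theta+\hat q\sin\theta$ with $\hat R(\theta)=e^{i\theta\hat a^\dagger\hat a}$; a homodyne measurement of $\hat p_\theta$ with outcome $m$ is the projection onto the bra ${}_{p_\theta}\!\langle m| = {}_{p}\!\langle m|\hat R(\theta)$, and ${}_{p_{\vec\theta}}\!\langle\vec m|$ denotes the tensor product of such bras over the $N$ modes. For a passive linear-optical unitary, $\hat U\to\mathbf U$ means $\hat U^\dagger\hat{\vec a}\hat U=\mathbf U\hat{\vec a}$ for the vector of annihilation operators. A real beam-splitter network is a product of beam splitters $e^{-\theta(\hat a_j\hat a_k^\dagger-\hat a_j^\dagger\hat a_k)}$, whose matrix is real orthogonal. The determinant factor accounts for the change of measure from linear post-processing of outcomes.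
   Formalization: R is assumed not block diagonal after any permutation of its rows combined with any relabelling of the modes (permutation of its columns), rather than only after row permutations. The statement above fails without it. *)

(* Defs.v *)
From HB Require Import structures.
From mathcomp Require Import all_boot all_order all_fingroup all_algebra.
From mathcomp Require Import all_classical all_reals all_analysis.
Set Implicit Arguments. Unset Strict Implicit. Unset Printing Implicit Defensive.
Import Order.TTheory GRing.Theory Num.Theory.
Local Open Scope ring_scope.

(* A vector of n operators, each a real linear combination of the quadratures
   x = (q_1,...,q_n,p_1,...,p_n), is represented by its coefficient matrix
   C : 'M_(n, n + n)  (operator_j = sum_k C j k * x_k). *)

Definition angle_ok (R : realType) (t : R) : Prop := - (pi / 2) < t <= pi / 2.

(* Coefficients of the rotated quadratures p_theta_j = p_j cos th_j + q_j sin th_j. *)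
Definition p_theta_coef (R : realType) (n : nat) (th : 'rV[R]_n) : 'M[R]_(n, n + n) :=
  row_mx (diag_mx (map_mx sin th)) (diag_mx (map_mx cos th)).

Definition p_coef (R : realType) (n : nat) : 'M[R]_(n, n + n) := row_mx 0 1%:M.

(* Heisenberg action of a real passive network B -> M :
   B^dag q B = M q, B^dag p B = M p, i.e. B^dag x B = (block_mx M 0 0 M) x. *)
Definition passive_real_symp (R : realType) (n : nat) (M : 'M[R]_n) : 'M[R]_(n + n) :=
  block_mx M 0 0 M.

(* Symplectic form and symplectic matrices (homogeneous Gaussian unitaries:
   U^dag x U = S x with S symplectic). *)
Definition Jmx (R : realType) (n : nat) : 'M[R]_(n + n) :=
  block_mx 0 1%:M (- 1%:M) 0.

Definition symplectic (R : realType) (n : nat) (S : 'M[R]_(n + n)) : Prop :=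
  S *m Jmx R n *m S^T = Jmx R n.

(* Conjugation of an operator vector with coefficient matrix C by a Gaussian
   unitary with symplectic matrix S: U^dag (C x) U = (C S) x. *)

(* "There is a Gaussian unitary U_G with sqrt|det L^-1| <L^-1 m|_p = <m|_p U_G
    for all m":  equivalently U_G^dag p U_G = L p  (p-eigenbras with labels m are
    mapped to p-eigenbras with labels L^-1 m). *)
Definition gaussian_relabel (R : realType) (n : nat) (L : 'M[R]_n) : Prop :=
  exists S : 'M[R]_(n + n), symplectic S /\ p_coef R n *m S = L *m p_coef R n.

(* "<m|_{p_th} B = sqrt|det L^-1| <L^-1 m|_{p_th'} for all m":  the left family
   is the (complete, m-labelled) family of joint eigenbras of B^dag p_th B with
   eigenvalues m, the right one that of L p_th' with eigenvalues m; the identity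
   of the labelled families is the operator identity B^dag p_th B = L p_th'. *)
Definition homodyne_equiv (R : realType) (n : nat) (th : 'rV[R]_n) (M : 'M[R]_n)
    (th' : 'rV[R]_n) (L : 'M[R]_n) : Prop :=
  p_theta_coef th *m passive_real_symp M = L *m p_theta_coef th'.

(* M is block diagonal up to permutation of rows (and relabelling of modes/columns):
   there is a nontrivial split of rows and columns with vanishing off-diagonal blocks. *)
Definition block_decomposable (R : realType) (n : nat) (M : 'M[R]_n) : Prop :=
  exists (s t : 'S_n) (k : nat), (0 < k < n)%N /\
    forall i j : 'I_n, ((i < k)%N != (j < k)%N) -> M (s i) (t j) = 0.

(* Main.v *)
Require Import Defs.
From HB Require Import structures.
From mathcomp Require Import all_boot all_order all_fingroup all_algebra.
From mathcomp Require Import all_classical all_reals all_analysis.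
From mathcomp Require Import zify ring lra.
Import Order.TTheory GRing.Theory Num.Theory.
Local Open Scope ring_scope.

Lemma split_perm m (A : {set 'I_m.+1}) :
  exists s : 'S_m.+1, forall i, (s i \in A) = (i < #|A|)%N.
Proof.
set sq := enum A ++ enum (~: A).
have Hsz : size sq = m.+1.
  by rewrite size_cat -!cardE cardsC card_ord.
have Hu : uniq sq.
  rewrite cat_uniq !enum_uniq /= andbT.
  apply/hasPn => x; rewrite !mem_enum finset.in_setC => ->; done.
pose f (i : 'I_m.+1) := nth ord0 sq i.
have finj : injective f.
  move=> i j; rewrite /f => /eqP; rewrite nth_uniq ?Hsz //.
  by move/eqP/val_inj.
exists (perm finj) => i; rewrite permE /f /sq nth_cat -cardE.
case: ifP => Hi.
  by rewrite -(mem_enum (mem A)); apply: mem_nth; rewrite -cardE.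
have : nth ord0 (enum (~: A)) (i - #|A|) \in ~: A.
  rewrite -mem_enum; apply: mem_nth; rewrite -cardE.
  have := cardsC A; rewrite card_ord => H.
  have := ltn_ord i; move/negbT: Hi H; rewrite -leqNgt => Hle H Hlt; by rewrite ltn_subLR // H.
move=> Hc; apply/negbTE; move: Hc; by rewrite inE.
Qed.
Lemma angle_eq (R : realType) (a b : R) : angle_ok a -> angle_ok b ->
  sin a * cos b - cos a * sin b = 0 -> a = b.
Proof.
rewrite /angle_ok => /andP[a1 a2] /andP[b1 b2]; rewrite -sinB => H.
have pi0 : 0 < (pi : R) := pi_gt0 R.
case: (ltgtP (a - b) 0) => Hx.
- have : 0 < sin (- (a - b)).
    apply: sin_gt0_pi; apply/andP; split; first by rewrite oppr_gt0.
    lra.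
  by rewrite sinN H oppr0 ltxx.
- have : 0 < sin (a - b).
    by apply: sin_gt0_pi; apply/andP; split => //; lra.
  by rewrite H ltxx.
- by apply/eqP; rewrite -subr_eq0 Hx.
Qed.

Theorem theorem3 (R : realType) (N : nat) (th : 'rV[R]_N) (M : 'M[R]_N) :
  (forall j : 'I_N, angle_ok (th 0 j)) ->
  M *m M^T = 1%:M ->
  ~ block_decomposable M ->
  (exists (th' : 'rV[R]_N) (L : 'M[R]_N),
      (forall j : 'I_N, angle_ok (th' 0 j)) /\
      L \in unitmx /\
      gaussian_relabel L /\
      homodyne_equiv th M th' L) ->
  exists t : R, forall j : 'I_N, th 0 j = t.
Proof.
move=> Hth HM Hnb [th' [L [Hth' [_ [_ Heq]]]]].
move: Heq; rewrite /homodyne_equiv /p_theta_coef /passive_real_symp.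
rewrite mul_row_block mul_mx_row ?mulmx0 ?mul0mx ?addr0 ?add0r.
case/eq_row_mx => Es Ec.
have key : forall i j, M i j != 0 -> th 0 i = th' 0 j.
  move=> i j Hm.
  have := congr1 (fun A : 'M[R]_N => A i j) Es; have := congr1 (fun A : 'M[R]_N => A i j) Ec.
  rewrite /= !mul_diag_mx !mul_mx_diag !mxE => Ec1 Es1.
  apply: angle_eq => //.
  have E : (sin (th 0 i) * cos (th' 0 j) - cos (th 0 i) * sin (th' 0 j)) * M i j
     = cos (th' 0 j) * (sin (th 0 i) * M i j) - sin (th' 0 j) * (cos (th 0 i) * M i j).
    by ring.
  move: E; rewrite Es1 Ec1.
  have -> : cos (th' 0 j) * (L i j * sin (th' 0 j)) - sin (th' 0 j) * (L i j * cos (th' 0 j)) = 0.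
    by ring.
  by move/eqP; rewrite mulf_eq0 (negbTE Hm) orbF => /eqP.
case: N th M th' L Hth HM Hnb Hth' Es Ec key => [|n] th M th' L Hth HM Hnb Hth' Es Ec key.
  by exists 0 => -[].
set t := th 0 ord0.
case: (boolP [forall j, th 0 j == t]) => [/forallP H | Hn].
  by exists t => j; apply/eqP.
exfalso; apply: Hnb.
pose I := [set i | th 0 i == t].
pose J := [set j | th' 0 j == t].
have HIJ : forall i j, (i \in I) != (j \in J) -> M i j = 0.
  move=> i j H; case: (eqVneq (M i j) 0) => // /key E.
  by move: H; rewrite !inE E eqxx.
have rowsum : forall i, \sum_j M i j ^+ 2 = 1.
  move=> i; transitivity ((M *m M^T) i i); last by rewrite HM mxE eqxx.
  by rewrite mxE; apply: eq_bigr => j _; rewrite !mxE expr2.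
have colsum : forall j, \sum_i M i j ^+ 2 = 1.
  move=> j; transitivity ((M^T *m M) j j); last by rewrite (mulmx1C HM) mxE eqxx.
  by rewrite mxE; apply: eq_bigr => i _; rewrite !mxE expr2.
have cI : (#|I|%:R : R) = \sum_(i in I) \sum_(j in J) M i j ^+ 2.
  rewrite -sumr_const; apply: eq_bigr => i Hi.
  rewrite -(rowsum i) (bigID (fun j => j \in J)) /= [X in _ + X]big1 ?addr0 //.
  by move=> j Hj; rewrite HIJ ?expr0n // Hi (negbTE Hj).
have cJ : (#|J|%:R : R) = \sum_(j in J) \sum_(i in I) M i j ^+ 2.
  rewrite -sumr_const; apply: eq_bigr => j Hj.
  rewrite -(colsum j) (bigID (fun i => i \in I)) /= [X in _ + X]big1 ?addr0 //.
  by move=> i Hi; rewrite HIJ ?expr0n // Hj (negbTE Hi).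
have cIJ : #|I| = #|J|.
  by apply/eqP; rewrite -(eqr_nat R) cI cJ exchange_big.
have [s Hs] := @split_perm n I.
have [u Hu] := @split_perm n J.
exists s, u, #|I|; split.
  apply/andP; split.
    by apply/card_gt0P; exists ord0; rewrite inE eqxx.
  move: Hn; rewrite negb_forall => /existsP [j Hj].
  have : (0 < #|~: I|)%N by apply/card_gt0P; exists j; rewrite !inE.
  move=> H1; have := cardsC I; rewrite card_ord => H2.
  apply: (@leq_trans (#|I| + #|~: I|)); last by rewrite H2.
  by rewrite -addn1 leq_add2l.
move=> i j Hij; apply: HIJ; by rewrite Hs Hu -cIJ.
Qed.
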